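(* Let $Z\in\{0,1\}^{n\times k}$ have exactly one $1$ in each row and at least one $1$ in each column, let $B\in[0,1]^{k\times k}$ be symmetric and full rank, and let $\mathscr{W}=ZBZ^T$. Let $\mathscr{D}$ be the diagonal matrix with $\mathscr{D}_{ii}=\sum_k\mathscr{W}_{ik}$ and $\mathscr{L}=\mathscr{D}^{-1/2}\mathscr{W}\mathscr{D}^{-1/2}$. Then there exists a matrix $\mu\in\mathbb{R}^{k\times k}$ such that the columns of $Z\mu$ are the eigenvectors of $\mathscr{L}$ corresponding to the nonzero eigenvalues of $\mathscr{L}$. Further, for all $i,j$, \[ z_i\mu=z_j\mu\iff z_i=z_j, \] where $z_i$ denotes the $i$th row of $Z$.
   Context: This is the population version of the Stochastic Blockmodel with $k$ blocks: $Z_{ig}=1$ means node $i$ belongs to block $g$, and $B$ contains the within- and between-block edge probabilities. *)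

(* Defs.v *)
From HB Require Import structures.
From mathcomp Require Import all_boot all_order all_algebra.
Set Implicit Arguments. Unset Strict Implicit. Unset Printing Implicit Defensive.
Import Order.TTheory GRing.Theory Num.Theory.
Local Open Scope ring_scope.

Definition sbmW (R : rcfType) (n k : nat) (Z : 'M[R]_(n, k)) (B : 'M[R]_k)
  : 'M[R]_n := Z *m B *m Z^T.

Definition sbm_deg (R : rcfType) (n : nat) (W : 'M[R]_n) (i : 'I_n) : R :=
  \sum_(j < n) W i j.

Definition sbm_Dmhalf (R : rcfType) (n : nat) (W : 'M[R]_n) : 'M[R]_n :=
  diag_mx (\row_i (Num.sqrt (sbm_deg W i))^-1).

Definition sbmL (R : rcfType) (n : nat) (W : 'M[R]_n) : 'M[R]_n :=
  sbm_Dmhalf W *m W *m sbm_Dmhalf W.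

(* Main.v *)
Require Import Defs.
From HB Require Import structures.
From mathcomp Require Import all_boot all_order all_algebra.
From mathcomp Require Import ring lra complex.
Import Order.TTheory GRing.Theory Num.Theory.
Local Open Scope ring_scope.

Set Implicit Arguments. Unset Strict Implicit. Unset Printing Implicit Defensive.

Lemma real_eig (R : rcfType) n (A : 'M[R]_n.+1) : A^T = A -> exists a, eigenvalue A a.
Proof.
move=> Asym.
pose f := real_complex R.
pose Ac := map_mx f A.
have Acsym : Ac \is symmetricmx.
  by rewrite is_hermitianmxE expr0 scale1r; apply/eqP/matrixP => x y; rewrite !mxE -{1}Asym mxE.
have Acreal : Ac \is a realmx.
  by apply/mxOverP => x y; rewrite mxE; apply/complex_realP; eexists.
have Ah := realsym_hermsym Acsym Acreal.
have dreal := hermitian_spectral_diag_real Ah.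
have /orthomx_spectralP AE := hermitian_normalmx Ah.
set P := spectralmx Ac in AE; set d := spectral_diag Ac in AE dreal.
have Pu : P \in unitmx by apply: spectral_unit.
have PA : P *m Ac = diag_mx d *m P.
  by rewrite {1}AE !mulmxA mulmxV // mul1mx.
have ev : eigenvalue Ac (d 0 0).
  apply/eigenvalueP; exists (row 0 P).
    by rewrite -row_mul PA row_mul row_diag_mx -scalemxAl rowE.
  apply/eqP => h; have := congr1 (mulmx^~ (invmx P)) h.
  rewrite -row_mul mulmxV // mul0mx => /rowP /(_ 0); rewrite !mxE eqxx /=.
  by move/eqP; rewrite oner_eq0.
exists (complex.Re (d 0 0)).
move: ev; rewrite eigenvalue_root_char.
have -> : d 0 0 = f (complex.Re (d 0 0)) by rewrite /f RRe_real //; apply: (mxOverP dreal).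
by rewrite -map_char_poly fmorph_root eigenvalue_root_char.
Qed.

Lemma sq_row_gt0 (R : rcfType) n (v : 'rV[R]_n) : v != 0 -> 0 < (v *m v^T) 0 0.
Proof.
move=> vn0; rewrite mxE.
have [j vj] : exists j, v 0 j != 0.
  apply/existsP; apply: contraR vn0; rewrite negb_exists => /forallP h.
  by apply/eqP/rowP => j; rewrite mxE; move: (h j); rewrite negbK => /eqP.
rewrite (bigD1 j) //= ltr_pwDl //.
  by rewrite !mxE -expr2 lt_def sqrf_eq0 vj sqr_ge0.
by apply: sumr_ge0 => i _; rewrite !mxE -expr2 sqr_ge0.
Qed.

Lemma unit_eig (R : rcfType) n (A : 'M[R]_n) a : eigenvalue A a ->
  exists u : 'rV_n, u *m u^T = 1%:M /\ u *m A = a *: u.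
Proof.
move/eigenvalueP => [v vA vn0].
have sp := sq_row_gt0 vn0; set s := (v *m v^T) 0 0 in sp.
exists ((Num.sqrt s)^-1 *: v); split; last by rewrite -scalemxAl vA !scalerA mulrC.
rewrite linearZ /= -scalemxAl -scalemxAr scalerA.
apply/matrixP => x y; rewrite !ord1 mxE [in RHS]mxE /= -/s -expr2 exprVn.
by rewrite sqr_sqrtr ?ltW // mulVf // gt_eqF.
Qed.

Lemma mx11E (R : ringType) (A B : 'M[R]_1) : A 0 0 = B 0 0 -> A = B.
Proof. by move=> h; apply/matrixP => x y; rewrite !ord1. Qed.

Lemma e0T (R : rcfType) n (v : 'rV[R]_n.+1) : delta_mx 0 0 *m v^T = (v 0 0)%:M.
Proof. by apply: mx11E; rewrite -rowE !mxE eqxx !mulr1n. Qed.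

Lemma e0T' (R : rcfType) n (v : 'rV[R]_n.+1) : v *m (delta_mx 0 0)^T = (v 0 0)%:M.
Proof. by rewrite -[LHS]trmxK trmx_mul trmxK e0T tr_scalar_mx. Qed.

Lemma householder (R : rcfType) n (u : 'rV[R]_n.+1) : u *m u^T = 1%:M ->
  exists H : 'M_n.+1, [/\ H^T = H, H *m H = 1%:M & row 0 H = u].
Proof.
move=> uu.
have [->|une] := eqVneq u (delta_mx 0 0).
  by exists 1%:M; rewrite trmx1 mulmx1 rowE mulmx1.
pose e : 'rV[R]_n.+1 := delta_mx 0 0.
pose w := u - e.
have wn0 : w != 0 by rewrite subr_eq0.
pose c := (w *m w^T) 0 0.
have cn0 : c != 0 by rewrite gt_eqF // sq_row_gt0.
have ww : w *m w^T = c%:M by apply: mx11E; rewrite [RHS]mxE eqxx mulr1n.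
have ew : e *m w^T = (u 0 0 - 1)%:M.
  by apply: mx11E; rewrite -rowE /w /e !mxE eqxx !mulr1n.
have cE : c = 2 * (1 - u 0 0).
  rewrite /c /w /e mulmxBl raddfB !mulmxBr uu !e0T e0T' !mxE !eqxx !mulr1n.
  lra.
exists (1%:M - (2 / c) *: (w^T *m w)); split.
- by rewrite linearD /= trmx1 linearN linearZ /= trmx_mul trmxK.
- clearbody w c; have SS : (w^T *m w) *m (w^T *m w) = c *: (w^T *m w).
    by rewrite mulmxA -(mulmxA w^T) ww mul_mx_scalar -scalemxAl.
  rewrite mulmxBl !mulmxBr !mul1mx !mulmx1 -scalemxAr -scalemxAl SS !scalerA.
  have -> : 2 / c * (2 / c) * c = 2 / c + 2 / c.
    by field.
  by rewrite scalerDl opprB addrK subrK.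
- rewrite rowE -/e mulmxBr mulmx1 -scalemxAr mulmxA ew mul_scalar_mx scalerA.
  have -> : 2 / c * (u 0 0 - 1) = -1.
    have u1 : 1 - u 0 0 != 0.
      by move: cn0; rewrite cE mulf_eq0 negb_or => /andP[].
    rewrite cE; field; exact: u1.
  by rewrite scaleN1r opprK /w addrC subrK.
Qed.

Lemma blk_orth (R : rcfType) m (U' : 'M[R]_m) : U' *m U'^T = 1%:M ->
  (block_mx (1%:M : 'M_1) 0 0 U') *m (block_mx (1%:M : 'M_1) 0 0 U')^T = 1%:M.
Proof.
move=> UU; rewrite tr_block_mx !trmx0 trmx1 mulmx_block.
by rewrite !mulmx0 !mul0mx !mulmx1 !addr0 !add0r UU -scalar_mx_block.
Qed.

Lemma blk_diag (R : rcfType) m (U' A' : 'M[R]_m) (x : 'M_1) :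
  is_diag_mx (U' *m A' *m U'^T) ->
  is_diag_mx ((block_mx (1%:M : 'M_1) 0 0 U') *m block_mx x 0 0 A' *m
     (block_mx (1%:M : 'M_1) 0 0 U')^T).
Proof.
move=> D; rewrite tr_block_mx !trmx0 trmx1 !mulmx_block.
rewrite !(mulmx0, mul0mx, mulmx1, mul1mx, addr0, add0r).
by rewrite is_diag_block_mx // !eqxx mx11_is_diag D.
Qed.

Lemma spectral_real (R : rcfType) n (A : 'M[R]_n) : A^T = A ->
  exists U : 'M_n, U *m U^T = 1%:M /\ is_diag_mx (U *m A *m U^T).
Proof.
elim: n A => [|n IH] A Asym.
  exists 1%:M; split; first by rewrite trmx1 mulmx1.
  by apply/is_diag_mxP => [[]].
have [a ev] := real_eig Asym.
have [u [uu uA]] := unit_eig ev.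
have [H [Hs HH H0]] := householder uu.
pose B : 'M_(1 + n) := H *m A *m H.
have Bs : B^T = B by rewrite /B !trmx_mul Hs Asym mulmxA.
have B0 : forall j, B 0 j = a * (j == 0)%:R.
  move=> j; have : row 0 B = a *: row 0 (1%:M : 'M_n.+1).
    by rewrite /B !row_mul H0 uA -scalemxAl -H0 -row_mul HH.
  by move/rowP/(_ j); rewrite !mxE eq_sym.
have BE : B = H *m A *m H by [].
clearbody B.
have l0 : lshift n (0 : 'I_1) = 0 by apply/val_inj.
have ur0 : ursubmx B = 0.
  apply/matrixP => i j; rewrite !mxE ord1 l0 B0.
  suff -> : (rshift 1 j == 0) = false by rewrite mulr0.
  by [].
have dl0 : dlsubmx B = 0.
  apply/matrixP => i j; rewrite !mxE ord1 l0 -Bs mxE B0.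
  suff -> : (rshift 1 i == 0) = false by rewrite mulr0.
  by [].
have [U' [UU' D']] := IH (drsubmx B) ltac:(by rewrite trmx_drsub Bs).
pose V : 'M_(1 + n) := block_mx 1%:M 0 0 U'.
exists (V *m H); split.
  rewrite trmx_mul Hs mulmxA -(mulmxA V) HH mulmx1; exact: blk_orth.
have -> : V *m H *m A *m (V *m H)^T = V *m B *m V^T.
  by rewrite trmx_mul Hs BE !mulmxA.
rewrite -[B]submxK ur0 dl0; exact: blk_diag.
Qed.

Unset Implicit Arguments. Set Strict Implicit.

Lemma unit_row_neq0 (R : fieldType) m (P : 'M[R]_m) i : P \in unitmx -> row i P != 0.
Proof.
move=> Pu; apply/eqP => h; have := congr1 (mulmx^~ (invmx P)) h.
rewrite -row_mul mulmxV // mul0mx => /rowP /(_ i); rewrite !mxE eqxx /=.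
by move/eqP; rewrite oner_eq0.
Qed.

Lemma diag_unit (R : fieldType) m (d : 'rV[R]_m) : (forall j, d 0 j != 0) ->
  diag_mx d *m diag_mx (\row_j (d 0 j)^-1) = 1%:M.
Proof.
move=> h; rewrite mulmx_diag; apply/matrixP => i j; rewrite !mxE.
by case: eqP => [->|]; rewrite ?mulr0n ?mulr1n // mulfV.
Qed.

Theorem lemma3p1 (R : rcfType) (n k : nat) (Z : 'M[R]_(n, k)) (B : 'M[R]_k)
  (hZ01 : forall i j, Z i j = 0 \/ Z i j = 1)
  (hZrow : forall i : 'I_n, exists! j : 'I_k, Z i j = 1)
  (hZcol : forall j : 'I_k, exists i : 'I_n, Z i j = 1)
  (hB01 : forall g h, 0 <= B g h <= 1)
  (hBsym : B^T = B)
  (hBrank : \rank B = k) :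
  let L := sbmL (sbmW Z B) in
  exists mu : 'M[R]_k,
    let X := Z *m mu in
    (* the columns of X are orthonormal eigenvectors of L with nonzero eigenvalues *)
    [/\ X^T *m X = 1%:M,
        exists lam : 'rV[R]_k,
          (forall j, lam 0 j != 0) /\ L *m X = X *m diag_mx lam,
        (* and they span every eigenvector of L with a nonzero eigenvalue *)
        forall (v : 'cV[R]_n) (a : R), a != 0 -> L *m v = a *: v ->
          (v^T <= X^T)%MS
      & forall i j : 'I_n, row i X = row j X <-> row i Z = row j Z].
Proof.
move=> L.
have rowZ : forall i, exists g, row i Z = delta_mx 0 g.
  move=> i; have [g [Zg Zu]] := hZrow i; exists g; apply/rowP => j; rewrite !mxE.
  have [->|jg] := eqVneq j g; first by rewrite Zg eqxx.
  rewrite andbF.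
  case: (hZ01 i j) => h; first by rewrite h.
  by move: (Zu _ h) => /eqP; rewrite eq_sym (negbTE jg).
have Z0 : forall i j, 0 <= Z i j.
  by move=> i j; case: (hZ01 i j) => h; rewrite h ?ler01.
have Bu : B \in unitmx by rewrite -row_free_unit /row_free hBrank.
pose nn := \row_g (\sum_i Z i g).
have nn_gt0 : forall g, 0 < nn 0 g.
  move=> g; have [i Zig] := hZcol g; rewrite mxE (bigD1 i) //= Zig.
  by rewrite ltr_pwDl // sumr_ge0.
pose dg := \row_g (\sum_h B g h * nn 0 h).
have dg_gt0 : forall g, 0 < dg 0 g.
  move=> g; have : row g B != 0 := unit_row_neq0 _ _ _ g Bu.
  move=> rn0; have [h Bh] : exists h, B g h != 0.
    apply/existsP; apply: contraR rn0; rewrite negb_exists => /forallP hh.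
    by apply/eqP/rowP => j; rewrite !mxE; move: (hh j); rewrite negbK => /eqP.
  rewrite mxE (bigD1 h) //= ltr_pwDl //.
    rewrite mulr_gt0 ?nn_gt0 // lt_def Bh /=; by case/andP: (hB01 g h).
  apply: sumr_ge0 => j _; apply: mulr_ge0; [by case/andP: (hB01 g j) | exact: ltW].
have Zent : forall i, exists g, forall x, Z i x = (x == g)%:R.
  move=> i; have [g rg] := rowZ i; exists g => x.
  by have := congr1 (fun v : 'rV_k => v 0 x) rg; rewrite !mxE eqxx /= => ->.
pose W := sbmW Z B.
have degE : forall i g, row i Z = delta_mx 0 g -> sbm_deg W i = dg 0 g.
  move=> i g rg; have rW : row i W = row g B *m Z^T.
    by rewrite /W /sbmW !row_mul rg -rowE.
  rewrite /sbm_deg (eq_bigr (fun j => row i W 0 j)); last by move=> j _; rewrite [RHS]mxE.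
  rewrite rW mxE; under eq_bigr => j _ do rewrite mxE.
  rewrite exchange_big /=; apply: eq_bigr => h _; rewrite [nn 0 h]mxE mulr_sumr.
  by apply: eq_bigr => j _; rewrite !mxE.
pose t := \row_g (Num.sqrt (dg 0 g))^-1.
pose T := diag_mx t.
pose Dm := sbm_Dmhalf W.
have DZ : Dm *m Z = Z *m T.
  apply/matrixP => i j; rewrite mul_diag_mx mul_mx_diag !mxE.
  have [g rg] := rowZ i; have [g' Zg] := Zent i.
  have gg : g' = g.
    have := congr1 (fun v : 'rV_k => v 0 g) rg; rewrite !mxE Zg !eqxx /=.
    by case: eqP => // _ /eqP; rewrite eq_sym oner_eq0.
  rewrite Zg gg; have [->|] := eqVneq j g; last by rewrite mulr0 mul0r.
  by rewrite (degE _ _ rg) mulrC mxE.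
have Dsym : Dm^T = Dm by rewrite /Dm /sbm_Dmhalf tr_diag_mx.
have Tsym : T^T = T by rewrite tr_diag_mx.
have LE : L = Z *m T *m B *m T *m Z^T.
  rewrite /L /sbmL -/W -/Dm /W /sbmW !mulmxA DZ -!mulmxA; congr (_ *m (_ *m (_ *m _))).
  by rewrite -[Dm]Dsym -trmx_mul DZ trmx_mul Tsym.
have ZZ : Z^T *m Z = diag_mx nn.
  apply/matrixP => g h; rewrite !mxE.
  have -> : \sum_j Z^T g j * Z j h = \sum_j ((g == h)%:R * Z j g).
    apply: eq_bigr => j _; rewrite mxE; have [g0 Zg] := Zent j; rewrite !Zg.
    case: (eqVneq g g0) => [eg|n1]; case: (eqVneq h g0) => [eh|n2].
    - by rewrite eg eh eqxx.
    - have e2 : (g0 == h) = false by apply/negbTE; rewrite eq_sym.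
      by rewrite eg e2 /= !(mulr0n, mulr1n, mulr0, mul0r).
    - by rewrite /= !(mulr0n, mulr1n, mulr0, mul0r).
    - by rewrite /= !(mulr0n, mulr1n, mulr0, mul0r).
  have [->|gh] := eqVneq g h.
    by under eq_bigr do rewrite mul1r; rewrite mulr1n.
  by under eq_bigr do rewrite mul0r; rewrite big1 // mulr0n.
pose r := \row_g Num.sqrt (nn 0 g).
pose Q := diag_mx r.
pose Qi := diag_mx (\row_g (r 0 g)^-1).
have rn0 : forall g, r 0 g != 0 by move=> g; rewrite mxE gt_eqF // sqrtr_gt0.
have tn0 : forall g, t 0 g != 0 by move=> g; rewrite mxE invr_eq0 gt_eqF // sqrtr_gt0.
have QQi : Q *m Qi = 1%:M by apply: diag_unit.
have QiQ : Qi *m Q = 1%:M by apply: mulmx1C.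
pose Ti := diag_mx (\row_g (t 0 g)^-1).
have TTi : T *m Ti = 1%:M by apply: diag_unit.
have QQ : Q *m Q = diag_mx nn.
  rewrite mulmx_diag; congr diag_mx; apply/rowP => g; rewrite !mxE -expr2 sqr_sqrtr //.
  exact: sumr_ge0.
have Qs : Q^T = Q by rewrite tr_diag_mx.
have Qis : Qi^T = Qi by rewrite tr_diag_mx.
pose M := Q *m T *m B *m T *m Q.
have Ms : M^T = M by rewrite /M !trmx_mul Qs Tsym hBsym !mulmxA.
have [U [UU /diag_mxP [e De]]] := spectral_real Ms.
have UtU : U^T *m U = 1%:M by apply: mulmx1C.
have Uu : U \in unitmx by case: (mulmx1_unit UU).
have Qu : Q \in unitmx by case: (mulmx1_unit QQi).
have Tu : T \in unitmx by case: (mulmx1_unit TTi).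
have MV : M *m U^T = U^T *m diag_mx e by rewrite -De !mulmxA UtU mul1mx.
exists (Qi *m U^T); move=> X.
have ZE : X *m (U *m Q) = Z.
  by rewrite /X !mulmxA -(mulmxA _ U^T) UtU mulmx1 -mulmxA QiQ mulmx1.
have XX : X^T *m X = 1%:M.
  rewrite /X !trmx_mul trmxK Qis !mulmxA -(mulmxA _ Z^T) ZZ -QQ.
  by rewrite !mulmxA -(mulmxA U) QiQ mulmx1 -(mulmxA U) QQi mulmx1 UU.
split => //.
- exists e; split.
    move=> j; have Mu : M \in unitmx by rewrite /M !unitmx_mul Qu Tu Bu.
    have Du : diag_mx e \in unitmx by rewrite -De unitmx_mul unitmx_mul Uu Mu unitmx_tr Uu.
    have := unit_row_neq0 _ _ _ j Du; rewrite row_diag_mx.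
    by apply: contraNneq => ->; rewrite scale0r.
  rewrite /X LE -!mulmxA -MV /M !mulmxA -(mulmxA _ Z^T) ZZ -QQ mulmxA -(mulmxA _ Q Qi) QQi mulmx1.
  by rewrite -(mulmxA Z Qi) QiQ mulmx1.

- move=> v a an0 Lv.
  have vE : v = X *m (U *m Q *m (a^-1 *: (T *m B *m T *m Z^T *m v))).
    by rewrite mulmxA ZE -scalemxAr !mulmxA -LE Lv scalerA mulVf // scale1r.
  by rewrite vE trmx_mul submxMl.
move=> i j; rewrite /X !row_mul; split; last by move=> ->.
have Mu : Qi *m U^T \in unitmx.
  by rewrite unitmx_mul unitmx_tr Uu andbT; case: (mulmx1_unit QiQ).
by move/(congr1 (mulmx^~ (invmx (Qi *m U^T)))); rewrite !mulmxK.
Qed.
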